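(* Let $\vec r\in\mathbb Z^n$. For every $\sigma,\tau\in H_{\vec r}$, $$\varphi_{\vec r}(\sigma)\varphi_{\vec r}(\tau)=\varphi_{\vec r}(\sigma\tau)\,\psi_{\vec r}(\sigma,\tau).$$ Consequently, the restriction of $\psi_{\vec r}$ to $H_{\vec r}\times H_{\vec r}$ is a 2-cocycle on $H_{\vec r}$ with values in $\mathbb T$.
   Context: $n\ge2$, $\theta\in M_n(\mathbb R)$ skew-symmetric, $\omega_{ij}=e^{2\pi i\theta_{ij}}$. $S_n$ acts on $\mathbb Z^n$ by $\sigma\vec r=(r_{\sigma^{-1}(1)},\dots,r_{\sigma^{-1}(n)})$; $H_{\vec r}=\{\sigma\in S_n:\sigma\vec r=\vec r\}$. For $\sigma,\tau\in S_n$: $\vartheta_{\vec r}(\sigma,\tau)=\prod_{i<j,\ \sigma(i)>\sigma(j)}(\omega_{\tau^{-1}(j),\tau^{-1}(i)})^{r_{\sigma(i)}r_{\sigma(j)}}$; $\psi_{\vec r}(\sigma,\tau)=\overline{\vartheta_{\vec r}(\sigma,e)}\,\vartheta_{\vec r}(\sigma,\tau)$ ($e$ the identity permutation); $\varphi_{\vec r}(\sigma)=\overline{\vartheta_{\vec r}(\sigma,e)}$ for $\sigma\in H_{\vec r}$. A 2-cocycle on a group $G$ with values in an abelian group is a function $\psi:G\times G\to A$ with $\psi(g,e)=\psi(e,g)=1$ and $\psi(g,h)\psi(gh,k)=\psi(g,hk)\psi(h,k)$ for all $g,h,k$. *)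

(* Defs.v *)
From HB Require Import structures.
From mathcomp Require Import all_boot all_order all_algebra all_fingroup.
From mathcomp Require Import reals trigo.
From mathcomp Require Import complex.
Set Implicit Arguments.
Unset Strict Implicit.
Unset Printing Implicit Defensive.
Import Order.TTheory GRing.Theory Num.Theory.
Local Open Scope ring_scope.

Definition expi2pi (R : realType) (t : R) : R[i] :=
  Complex (cos (2 * pi * t)) (sin (2 * pi * t)).

Definition omega (R : realType) (n : nat) (theta : 'M[R]_n) (i j : 'I_n) : R[i] :=
  expi2pi (theta i j).

(* Usual composition of permutations: (comp_perm s t) x = s (t x).
   (MathComp's group law is (s * t)%g x = t (s x).) *)
Definition comp_perm (n : nat) (s t : 'S_n) : 'S_n := (t * s)%g.

Definition perm_act (n : nat) (s : 'S_n) (r : 'I_n -> int) : 'I_n -> int :=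
  fun k => r ((s^-1)%g k).

Definition Hstab (n : nat) (r : 'I_n -> int) (s : 'S_n) : Prop :=
  perm_act s r = r.

Definition vartheta (R : realType) (n : nat) (theta : 'M[R]_n)
    (r : 'I_n -> int) (s t : 'S_n) : R[i] :=
  \prod_(i : 'I_n) \prod_(j : 'I_n | (i < j)%N && (s j < s i)%N)
     (omega theta ((t^-1)%g j) ((t^-1)%g i)) ^ (r (s i) * r (s j)).

Definition psi (R : realType) (n : nat) (theta : 'M[R]_n)
    (r : 'I_n -> int) (s t : 'S_n) : R[i] :=
  (vartheta theta r s 1%g)^* * vartheta theta r s t.

Definition phi (R : realType) (n : nat) (theta : 'M[R]_n)
    (r : 'I_n -> int) (s : 'S_n) : R[i] :=
  (vartheta theta r s 1%g)^*.

Definition is_T_2cocycle_on (R : realType) (n : nat) (H : 'S_n -> Prop)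
    (f : 'S_n -> 'S_n -> R[i]) : Prop :=
  (forall g h, H g -> H h -> `|f g h| = 1) /\
  (forall g, H g -> f g 1%g = 1 /\ f 1%g g = 1) /\
  (forall g h k, H g -> H h -> H k ->
     f g h * f (comp_perm g h) k = f g (comp_perm h k) * f h k).

(* Main.v *)
Require Import Defs.
From HB Require Import structures.
From mathcomp Require Import all_boot all_order all_algebra all_fingroup.
From mathcomp Require Import reals trigo.
From mathcomp Require Import complex.
From mathcomp Require Import ring.
From Stdlib Require Import FunctionalExtensionality.
Import Order.TTheory GRing.Theory Num.Theory.
Local Open Scope ring_scope.

Lemma expi_neg (R : realType) (x : R) : expi2pi (- x) * expi2pi x = 1.
Proof.
rewrite /expi2pi mulrN cosN sinN.
apply/eqP; rewrite eq_complex /=.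
apply/andP; split; apply/eqP.
  by rewrite mulNr opprK -!expr2 cos2Dsin2.
by rewrite mulNr mulrC subrr.
Qed.

Lemma expi_conj (R : realType) (x : R) : (expi2pi x)^* = expi2pi (- x).
Proof.
by rewrite /expi2pi mulrN cosN sinN.
Qed.
Definition unimod {R : realType} (z : R[i]) := z^* * z = 1.

Lemma unimod1 {R : realType} : unimod (1 : R[i]).
Proof. by rewrite /unimod rmorph1 mulr1. Qed.

Lemma unimodM (R : realType) (x y : R[i]) : unimod x -> unimod y -> unimod (x * y).
Proof.
by rewrite /unimod rmorphM => hx hy; rewrite mulrACA hx hy mulr1.
Qed.

Lemma unimod_prod {R : realType} (I : Type) (s : seq I) (P : pred I) (F : I -> R[i]) :
  (forall i, P i -> unimod (F i)) -> unimod (\prod_(i <- s | P i) F i).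
Proof.
move=> h; apply: (big_ind (@unimod R)) => //; [exact: unimod1 | exact: unimodM].
Qed.

Lemma unimod_unit {R : realType} (z : R[i]) : unimod z -> z \is a GRing.unit.
Proof.
move=> h; rewrite unitfE; apply/eqP => z0.
by move: h; rewrite /unimod z0 mulr0 => /eqP; rewrite eq_sym oner_eq0.
Qed.

Lemma unimodX (R : realType) (z : R[i]) (k : int) : unimod z -> unimod (z ^ k).
Proof.
move=> h; rewrite /unimod rmorphXz; last exact: unimod_unit h.
by rewrite -expfzMl h exp1rz.
Qed.

Lemma unimod_norm {R : realType} (z : R[i]) : unimod z -> `|z| = 1.
Proof.
move=> h; apply/eqP; rewrite -sqrp_eq1 ?normr_ge0 // normCKC h.
exact/eqP.
Qed.

Lemma prod_pairs {C : comPzRingType} {n : nat} (f : 'I_n -> 'I_n -> C) :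
  (forall a, f a a = 1) ->
  \prod_(a : 'I_n) \prod_(b : 'I_n) f a b =
  \prod_(a : 'I_n) \prod_(b : 'I_n) (if (a < b)%N then f a b * f b a else 1).
Proof.
move=> f0.
have -> : \prod_(a : 'I_n) \prod_(b : 'I_n) (if (a < b)%N then f a b * f b a else 1) =
  (\prod_(a : 'I_n) \prod_(b : 'I_n) (if (a < b)%N then f a b else 1)) *
  (\prod_(a : 'I_n) \prod_(b : 'I_n) (if (b < a)%N then f a b else 1)).
  rewrite [X in _ = _ * X]exchange_big /= -big_split /=.
  apply: eq_bigr => a _; rewrite -big_split /=; apply: eq_bigr => b _.
  by case: ifP; rewrite ?mulr1.
rewrite -big_split /=; apply: eq_bigr => a _; rewrite -big_split /=.
apply: eq_bigr => b _.
case: (ltngtP a b) => h; rewrite ?mulr1 ?mul1r //.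
by rewrite (val_inj h) f0.
Qed.

Definition Th {C : comPzRingType} {n : nat} (G : 'I_n -> 'I_n -> C) (s t : 'S_n) : C :=
  \prod_(i : 'I_n) \prod_(j : 'I_n | (i < j)%N && (s j < s i)%N)
     G ((t^-1)%g i) ((t^-1)%g j).

Lemma Th_reindex {C : comPzRingType} {n : nat} (G : 'I_n -> 'I_n -> C) (s t : 'S_n) :
  Th G s t = \prod_(a : 'I_n) \prod_(b : 'I_n)
    (if (t a < t b)%N && (s (t b) < s (t a))%N then G a b else 1).
Proof.
rewrite /Th (reindex_inj (@perm_inj _ t)) /=.
apply: eq_bigr => a _; rewrite big_mkcond (reindex_inj (@perm_inj _ t)) /=.
by apply: eq_bigr => b _; rewrite !permK.
Qed.

Lemma Th_reindex1 {C : comPzRingType} {n : nat} (G : 'I_n -> 'I_n -> C) (u : 'S_n) :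
  Th G u 1%g = \prod_(a : 'I_n) \prod_(b : 'I_n)
    (if (a < b)%N && (u b < u a)%N then G a b else 1).
Proof.
rewrite /Th; apply: eq_bigr => a _; rewrite big_mkcond; apply: eq_bigr => b _.
by rewrite invg1 !perm1.
Qed.

Lemma prod3 {C : comPzRingType} {n : nat} (f g h : 'I_n -> 'I_n -> C) :
  (forall a : 'I_n, f a a = 1) -> (forall a : 'I_n, g a a = 1) -> (forall a : 'I_n, h a a = 1) ->
  (forall a b : 'I_n, (a < b)%N -> f a b * f b a = (g a b * g b a) * (h a b * h b a)) ->
  \prod_(a : 'I_n) \prod_(b : 'I_n) f a b =
  (\prod_(a : 'I_n) \prod_(b : 'I_n) g a b) * \prod_(a : 'I_n) \prod_(b : 'I_n) h a b.
Proof.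
move=> f0 g0 h0 hfgh; rewrite (prod_pairs f f0) (prod_pairs g g0) (prod_pairs h h0) -big_split /=.
apply: eq_bigr => a _; rewrite -big_split /=; apply: eq_bigr => b _.
by case: ifP => [/hfgh|]; rewrite ?mulr1.
Qed.

Lemma Th_key {C : comPzRingType} {n : nat} (G : 'I_n -> 'I_n -> C) (s t : 'S_n) :
  (forall a b, G a b * G b a = 1) ->
  Th G (comp_perm s t) 1%g = Th G t 1%g * Th G s t.
Proof.
move=> hG.
rewrite [Th G (comp_perm s t) 1%g]Th_reindex1 [Th G t 1%g]Th_reindex1 [Th G s t]Th_reindex.
apply: prod3; try by move=> a; rewrite ltnn.
move=> a b hab.
have hba : (b < a)%N = false by apply/negbTE; rewrite -leqNgt ltnW.
rewrite hab hba /comp_perm !permM /= ?mulr1 ?mul1r.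
have nab : a != b by apply/eqP => e; move: hab; rewrite e ltnn.
case: (ltngtP (t a) (t b)) => h1; last first.
  by move: nab; rewrite (perm_inj (ord_inj h1)) eqxx.
all: case: (ltngtP (s (t a)) (s (t b))) => h2; last first.
1,4: by move: nab; rewrite (perm_inj (perm_inj (ord_inj h2))) eqxx.
all: by rewrite /= ?mulr1 ?mul1r ?hG.
Qed.

Lemma unimod_conj {R : realType} (z : R[i]) : unimod z -> unimod z^*.
Proof. by rewrite /unimod conjCK mulrC. Qed.

Lemma unimod_inv {R : realType} (z : R[i]) : unimod z -> z^* = z^-1.
Proof.
move=> h; have z0 : z != 0 by rewrite -unitfE; exact: unimod_unit.
by rewrite -[LHS]mulr1 -(mulfV z0) mulrA h mul1r.
Qed.

Lemma unimod_omega {R : realType} {n : nat} (theta : 'M[R]_n) i j :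
  unimod (omega theta i j).
Proof. by rewrite /unimod /omega expi_conj expi_neg. Qed.

Lemma unimod_vartheta {R : realType} {n : nat} (theta : 'M[R]_n) r s t :
  unimod (vartheta theta r s t).
Proof.
apply: unimod_prod => i _; apply: unimod_prod => j _.
apply: unimodX; exact: unimod_omega.
Qed.

Definition Gw {R : realType} {n : nat} (theta : 'M[R]_n) (r : 'I_n -> int)
  (x y : 'I_n) : R[i] := omega theta y x ^ (r x * r y).

Lemma Gw_skew {R : realType} {n : nat} (theta : 'M[R]_n) (hskew : theta^T = - theta)
  r a b : Gw theta r a b * Gw theta r b a = 1.
Proof.
rewrite /Gw [r b * r a]mulrC -expfzMl.
have e : theta b a = - theta a b.
  by have := congr1 (fun M : 'M[R]_n => M a b) hskew; rewrite !mxE.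
by rewrite /omega e expi_neg exp1rz.
Qed.

Lemma Hstab1 {n : nat} (r : 'I_n -> int) : Hstab r 1%g.
Proof. by apply: functional_extensionality => k; rewrite /perm_act invg1 perm1. Qed.

Lemma Hstab_comp {n : nat} {r : 'I_n -> int} {s t : 'S_n} :
  Hstab r s -> Hstab r t -> Hstab r (comp_perm s t).
Proof.
move=> hs ht; apply: functional_extensionality => k; rewrite /perm_act /comp_perm invMg permM.
have e1 := congr1 (fun f => f (s^-1 k)%g) ht; rewrite /perm_act /= in e1.
have e2 := congr1 (fun f => f k) hs; rewrite /perm_act /= in e2.
by rewrite e1 e2.
Qed.

Lemma vartheta_Th {R : realType} {n : nat} (theta : 'M[R]_n) r s t :
  Hstab r s -> Hstab r t -> vartheta theta r s t = Th (Gw theta r) s t.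
Proof.
move=> hs ht.
have hs' : forall k, r (s k) = r k.
  move=> k; have e := congr1 (fun f => f (s k)) hs.
  by rewrite /perm_act /= permK in e; rewrite -e.
have ht' : forall k, r ((t^-1)%g k) = r k.
  by move=> k; have e := congr1 (fun f => f k) ht; rewrite /perm_act /= in e.
rewrite /vartheta /Th; apply: eq_bigr => i _; apply: eq_bigr => j _.
by rewrite /Gw !hs' !ht'.
Qed.

Lemma vartheta_key {R : realType} {n : nat} (theta : 'M[R]_n) (hskew : theta^T = - theta)
  {r : 'I_n -> int} {s t : 'S_n} : Hstab r s -> Hstab r t ->
  vartheta theta r (comp_perm s t) 1%g = vartheta theta r t 1%g * vartheta theta r s t.
Proof.
move=> hs ht.
rewrite (vartheta_Th theta r _ _ (Hstab_comp hs ht) (Hstab1 r)).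
rewrite (vartheta_Th theta r _ _ ht (Hstab1 r)) (vartheta_Th theta r _ _ hs ht).
apply: Th_key; exact: Gw_skew.
Qed.

Lemma vartheta1l {R : realType} {n : nat} (theta : 'M[R]_n) r t :
  vartheta theta r 1%g t = 1.
Proof.
rewrite /vartheta big1 // => i _; rewrite big_pred0 // => j /=.
rewrite !perm1; apply/negbTE/andP => -[h1 h2].
by move: (ltn_trans h1 h2); rewrite ltnn.
Qed.

Theorem proposition4p11 (R : realType) (n : nat) (hn : (2 <= n)%N)
    (theta : 'M[R]_n) (hskew : theta^T = - theta) (r : 'I_n -> int) :
  (forall s t : 'S_n, Hstab r s -> Hstab r t ->
     phi theta r s * phi theta r t
       = phi theta r (comp_perm s t) * psi theta r s t)
  /\ is_T_2cocycle_on (Hstab r) (psi theta r).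
Proof.
have U := unimod_vartheta theta r.
have NZ : forall s t, vartheta theta r s t != 0.
  by move=> s t; rewrite -unitfE; apply: unimod_unit.
have Dq : forall s t, Hstab r s -> Hstab r t ->
    vartheta theta r s t = vartheta theta r (comp_perm s t) 1%g / vartheta theta r t 1%g.
  move=> s t hs ht; rewrite (vartheta_key theta hskew hs ht) [_ * vartheta theta r s t]mulrC mulfK //.
split.
  move=> s t hs ht; rewrite /phi /psi !unimod_inv // (Dq s t hs ht).
  by field; rewrite !NZ.
split.
  by move=> g h _ _; apply: unimod_norm; apply: unimodM; [apply: unimod_conj|].
split.
  move=> g _; rewrite /psi !vartheta1l rmorph1 mul1r; split=> //.
  exact: U.
move=> g h k hg hh hk.
have hgh := Hstab_comp hg hh; have hhk := Hstab_comp hh hk.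
rewrite /psi (Dq g h hg hh) (Dq _ k hgh hk) (Dq g _ hg hhk) (Dq h k hh hk).
rewrite !unimod_inv //.
have -> : comp_perm (comp_perm g h) k = comp_perm g (comp_perm h k).
  by rewrite /comp_perm mulgA.
field.
by rewrite !NZ.
Qed.
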